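(* Let $(\Lambda,d)$ be a $k$-graph and let $\overline{\Lambda}$ be the extension of $\Lambda$ described in the context (objects $\Lambda^0\sqcup\widetilde{V_\Lambda}$, morphisms $\Lambda\sqcup\widetilde{P_\Lambda}$, with the range, source, composition and identities given there). Then $\overline{\Lambda}$ is a category.
   Context: A $k$-graph $(\Lambda,d)$ is a countable category with a degree functor $d:\Lambda\to\mathbb{N}^k$ satisfying unique factorization (if $d(\lambda)=m+n$ there are unique $\mu,\nu$ with $\lambda=\mu\nu$, $d(\mu)=m$, $d(\nu)=n$); $\Lambda^0$ vertices, $r,s$ range/source, $v\Lambda^n=\{\lambda:r(\lambda)=v,d(\lambda)=n\}$; $e_i$ standard basis, $\le$ coordinatewise ($m\not\le n$ means not $m\le n$), $\vee,\wedge$ coordinatewise max/min. For $m\in(\mathbb{N}\cup\{\infty\})^k$, $\Omega_{k,m}$ has objects $\{p\in\mathbb{N}^k:p\le m\}$, morphisms $(p,q)$, $p\le q\le m$, $r(p,q)=p$, $s(p,q)=q$, $d(p,q)=q-p$. A graph morphism $x:\Omega_{k,m}\to\Lambda$ is a degree-preserving functor; $d(x)=m$, $x(a,b)=x((a,b))$, $x(a)=x(a,a)$. It is a boundary path if there is $n_x\in\mathbb{N}^k$, $n_x\le d(x)$, with $x(p)\Lambda^{e_i}=\emptyset$ whenever $p\in\mathbb{N}^k$, $n_x\le p\le d(x)$, $p_i=d(x)_i$; $\Lambda^{\le\infty}$ is the set of boundary paths. $\sigma^px(a,b)=x(a+p,b+p)$ on $\Omega_{k,d(x)-p}$ ($p\in\mathbb{N}^k$,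 $p\le d(x)$); for $\lambda$ with $s(\lambda)=x(0)$, $\lambda x$ is the graph morphism on $\Omega_{k,d(\lambda)+d(x)}$ with $(\lambda x)(0,d(\lambda))=\lambda$, $(\lambda x)(0,p)=\lambda x(0,p-d(\lambda))$. Let $V_\Lambda=\{(x;m):x\in\Lambda^{\le\infty},m\in\mathbb{N}^k,m\not\le d(x)\}$ with equivalence $(x;m)\approx(y;p)$ iff $x(m\wedge d(x))=y(p\wedge d(y))$ and $m-m\wedge d(x)=p-p\wedge d(y)$; classes $[x;m]$, quotient $\widetilde{V_\Lambda}$. Let $P_\Lambda=\{(x;(m,n)):x\in\Lambda^{\le\infty},m,n\in\mathbb{N}^k,m\le n,n\not\le d(x)\}$ with equivalence $(x;(m,n))\sim(y;(p,q))$ iff $x(m\wedge d(x),n\wedge d(x))=y(p\wedge d(y),q\wedge d(y))$, $m-m\wedge d(x)=p-p\wedge d(y)$, $n-m=q-p$; classes $[x;(m,n)]$, quotient $\widetilde{P_\Lambda}$. The extension $\overline{\Lambda}$ has objects $\Lambda^0\sqcup\widetilde{V_\Lambda}$ and morphisms $\Lambda\sqcup\widetilde{P_\Lambda}$; on $\Lambda$ range, source, composition and identities are those of $\Lambda$; $\overline r([x;(m,n)])=x(m)$ if $m\le d(x)$ and $=[x;m]$ otherwise; $\overline s([x;(m,n)])=[x;n]$; the identity at $[x;m]$ is $[x;(m,m)]$; for $\lambda\in\Lambda$ with $s(\lambda)=\overline r([x;(m,n)])$, $\lambda[x;(m,n)]=[\lambda\sigma^mx;(0,d(\lambda)+n-m)]$;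 for $\overline s([x;(m,n)])=\overline r([y;(p,q)])$, $[x;(m,n)][y;(p,q)]=[z;(m,n+q-p)]$ with $z=x(0,n\wedge d(x))\sigma^{p\wedge d(y)}y$. (These maps are well defined on equivalence classes.) The degree $\overline d$ equals $d$ on $\Lambda$ and $\overline d([x;(m,n)])=n-m$. *)

(* Defs.v *)
From HB Require Import structures.
From mathcomp Require Import all_boot.
From Stdlib Require Import ClassicalEpsilon.
Set Implicit Arguments. Unset Strict Implicit. Unset Printing Implicit Defensive.

Definition Nk (k : nat) := {ffun 'I_k -> nat}.
(* None stands for infinity *)
Definition NIk (k : nat) := {ffun 'I_k -> option nat}.

Section NkOps.
Variable k : nat.
Definition nk0 : Nk k := [ffun => 0].
Definition addk (m n : Nk k) : Nk k := [ffun i => m i + n i].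
Definition subk (m n : Nk k) : Nk k := [ffun i => m i - n i].
Definition joink (m n : Nk k) : Nk k := [ffun i => maxn (m i) (n i)].
Definition lek (m n : Nk k) : bool := [forall i, m i <= n i].
Definition ek (i : 'I_k) : Nk k := [ffun j => if j == i then 1 else 0].
Definition lekx (m : Nk k) (D : NIk k) : bool :=
  [forall i, if D i is Some a then m i <= a else true].
Definition meetx (m : Nk k) (D : NIk k) : Nk k :=
  [ffun i => if D i is Some a then minn (m i) a else m i].
End NkOps.

(* A countable category presented with a total composition map, whose
   values are only constrained on composable pairs (s f = r g). *)
Record kgraph (k : nat) := KGraph {
  kobj : countType;
  kmor : countType;
  kr : kmor -> kobj;
  ks : kmor -> kobj;
  kid : kobj -> kmor;
  kcomp : kmor -> kmor -> kmor;
  kd : kmor -> Nk k;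
  kr_id : forall v, kr (kid v) = v;
  ks_id : forall v, ks (kid v) = v;
  kr_comp : forall f g, ks f = kr g -> kr (kcomp f g) = kr f;
  ks_comp : forall f g, ks f = kr g -> ks (kcomp f g) = ks g;
  kcomp_idl : forall f, kcomp (kid (kr f)) f = f;
  kcomp_idr : forall f, kcomp f (kid (ks f)) = f;
  kcomp_assoc : forall f g h, ks f = kr g -> ks g = kr h ->
    kcomp f (kcomp g h) = kcomp (kcomp f g) h;
  kd_id : forall v, kd (kid v) = nk0 k;
  kd_comp : forall f g, ks f = kr g -> kd (kcomp f g) = addk (kd f) (kd g);
  kfact : forall f m n, kd f = addk m n ->
    exists! p : kmor * kmor,
      ks p.1 = kr p.2 /\ f = kcomp p.1 p.2 /\ kd p.1 = m /\ kd p.2 = n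
}.

Section Extension.
Variables (k : nat) (L : kgraph k).
Local Notation M := (kmor L).
Local Notation V := (kobj L).
Local Notation r := (@kr k L).
Local Notation s := (@ks k L).
Local Notation d := (@kd k L).
Local Notation comp := (@kcomp k L).

(* the segment of f between degrees a and b (a <= b <= d f), obtained from
   unique factorization f = f1 g f3 with d f1 = a, d g = b - a *)
Definition seg (f : M) (a b : Nk k) : M :=
  epsilon (inhabits f) (fun g => exists f1 f3,
    s f1 = r g /\ s g = r f3 /\ f = comp f1 (comp g f3) /\
    d f1 = a /\ d g = subk b a).

(* raw data of a map x : Omega_{k, pdeg x} -> Lambda, x(p,q) = pmap x p q *)
Record rpath := RPath { pdeg : NIk k; pmap : Nk k -> Nk k -> M }.

Definition vert (x : rpath) (p : Nk k) : V := r (pmap x p p).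

Definition graph_morph (x : rpath) : Prop :=
  (forall p, lekx p (pdeg x) -> pmap x p p = kid (vert x p)) /\
  (forall p q t, lek p q -> lek q t -> lekx t (pdeg x) ->
     [/\ d (pmap x p q) = subk q p,
         s (pmap x p q) = r (pmap x q t) &
         pmap x p t = comp (pmap x p q) (pmap x q t)]).

Definition boundary_path (x : rpath) : Prop :=
  graph_morph x /\
  exists nx : Nk k, lekx nx (pdeg x) /\
    forall p : Nk k, lek nx p -> lekx p (pdeg x) ->
      forall i, pdeg x i = Some (p i) ->
        forall f : M, r f = vert x p -> d f <> ek i.

Definition shift (p : Nk k) (x : rpath) : rpath :=
  RPath [ffun i => omap (fun a => a - p i) (pdeg x i)]
        (fun a b => pmap x (addk a p) (addk b p)).

(* lambda x, for s lambda = x(0) *)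
Definition prepend (f : M) (x : rpath) : rpath :=
  RPath [ffun i => omap (addn (d f i)) (pdeg x i)]
        (fun a b => seg (comp f (pmap x (nk0 k) (subk (joink b (d f)) (d f)))) a b).

(* objects and morphisms of the extension (before quotienting) *)
Definition obar := (V + (rpath * Nk k))%type.
Definition mbar := (M + (rpath * Nk k * Nk k))%type.

Definition obar_valid (a : obar) : Prop :=
  match a with
  | inl _ => True
  | inr (x, m) => boundary_path x /\ ~~ lekx m (pdeg x)
  end.

Definition mbar_valid (f : mbar) : Prop :=
  match f with
  | inl _ => True
  | inr (x, m, n) => [/\ boundary_path x, lek m n & ~~ lekx n (pdeg x)]
  end.

Definition Veq (x : rpath) (m : Nk k) (y : rpath) (p : Nk k) : Prop :=
  vert x (meetx m (pdeg x)) = vert y (meetx p (pdeg y)) /\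
  subk m (meetx m (pdeg x)) = subk p (meetx p (pdeg y)).

Definition Peq (x : rpath) (m n : Nk k) (y : rpath) (p q : Nk k) : Prop :=
  [/\ pmap x (meetx m (pdeg x)) (meetx n (pdeg x)) =
      pmap y (meetx p (pdeg y)) (meetx q (pdeg y)),
      subk m (meetx m (pdeg x)) = subk p (meetx p (pdeg y)) &
      subk n m = subk q p].

Definition obar_eq (a b : obar) : Prop :=
  match a, b with
  | inl v, inl w => v = w
  | inr (x, m), inr (y, p) => Veq x m y p
  | _, _ => False
  end.

Definition mbar_eq (f g : mbar) : Prop :=
  match f, g with
  | inl u, inl v => u = v
  | inr (x, m, n), inr (y, p, q) => Peq x m n y p q
  | _, _ => False
  end.

Definition rbar (f : mbar) : obar :=
  match f with
  | inl u => inl (r u)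
  | inr (x, m, n) => if lekx m (pdeg x) then inl (vert x m) else inr (x, m)
  end.

Definition sbar (f : mbar) : obar :=
  match f with
  | inl u => inl (s u)
  | inr (x, m, n) => inr (x, n)
  end.

Definition idbar (a : obar) : mbar :=
  match a with
  | inl v => inl (kid v)
  | inr (x, m) => inr (x, m, m)
  end.

(* composition; the case (class, path) never is composable, so its value
   is irrelevant *)
Definition compbar (f g : mbar) : mbar :=
  match f, g with
  | inl u, inl v => inl (comp u v)
  | inl u, inr (x, m, n) =>
      inr (prepend u (shift m x), nk0 k, subk (addk (d u) n) m)
  | inr (x, m, n), inr (y, p, q) =>
      inr (prepend (pmap x (nk0 k) (meetx n (pdeg x))) (shift (meetx p (pdeg y)) y),
           m, subk (addk n q) p)
  | inr _, inl _ => f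
  end.
End Extension.

(* A category presented by representatives: validity predicates, equivalence
   relations (equality of classes), and structure maps on representatives. *)
Record setoid_category (O Mo : Type) (vo : O -> Prop) (vm : Mo -> Prop)
  (eo : O -> O -> Prop) (em : Mo -> Mo -> Prop)
  (r s : Mo -> O) (i : O -> Mo) (c : Mo -> Mo -> Mo) : Prop := {
  eo_refl : forall a, vo a -> eo a a;
  eo_sym : forall a b, vo a -> vo b -> eo a b -> eo b a;
  eo_trans : forall a b e, vo a -> vo b -> vo e -> eo a b -> eo b e -> eo a e;
  em_refl : forall f, vm f -> em f f;
  em_sym : forall f g, vm f -> vm g -> em f g -> em g f;
  em_trans : forall f g h, vm f -> vm g -> vm h -> em f g -> em g h -> em f h;
  r_valid : forall f, vm f -> vo (r f);
  s_valid : forall f, vm f -> vo (s f);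
  i_valid : forall a, vo a -> vm (i a);
  c_valid : forall f g, vm f -> vm g -> eo (s f) (r g) -> vm (c f g);
  r_resp : forall f g, vm f -> vm g -> em f g -> eo (r f) (r g);
  s_resp : forall f g, vm f -> vm g -> em f g -> eo (s f) (s g);
  i_resp : forall a b, vo a -> vo b -> eo a b -> em (i a) (i b);
  c_resp : forall f f' g g', vm f -> vm f' -> vm g -> vm g' ->
    em f f' -> em g g' -> eo (s f) (r g) -> em (c f g) (c f' g');
  r_comp : forall f g, vm f -> vm g -> eo (s f) (r g) -> eo (r (c f g)) (r f);
  s_comp : forall f g, vm f -> vm g -> eo (s f) (r g) -> eo (s (c f g)) (s g);
  r_i : forall a, vo a -> eo (r (i a)) a;
  s_i : forall a, vo a -> eo (s (i a)) a;
  comp_il : forall f, vm f -> em (c (i (r f)) f) f;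
  comp_ir : forall f, vm f -> em (c f (i (s f))) f;
  comp_assoc : forall f g h, vm f -> vm g -> vm h ->
    eo (s f) (r g) -> eo (s g) (r h) -> em (c f (c g h)) (c (c f g) h)
}.

(* Main.v *)
Require Import Defs.
From mathcomp Require Import all_boot zify.
From Stdlib Require Import ClassicalEpsilon.
Set Implicit Arguments. Unset Strict Implicit. Unset Printing Implicit Defensive.
Set Warnings "-notation-overridden".
Import Defs.

Section NkLemmas.
Variable k : nat.
Implicit Types (m n p : Nk k) (D : NIk k).

Lemma addkE m n i : addk m n i = m i + n i. Proof. by rewrite ffunE. Qed.
Lemma subkE m n i : subk m n i = m i - n i. Proof. by rewrite ffunE. Qed.
Lemma joinkE m n i : joink m n i = maxn (m i) (n i). Proof. by rewrite ffunE. Qed.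
Lemma nk0E i : nk0 k i = 0. Proof. by rewrite ffunE. Qed.
Lemma ekE (j i : 'I_k) : ek j i = (if i == j then 1 else 0). Proof. by rewrite ffunE. Qed.
Lemma meetxE m D i : meetx m D i = (if D i is Some a then minn (m i) a else m i).
Proof. by rewrite ffunE. Qed.

Lemma lekP m n : reflect (forall i, m i <= n i) (lek m n).
Proof. exact: forallP. Qed.
Lemma lekxP m D : reflect (forall i, if D i is Some a then m i <= a else true) (lekx m D).
Proof. exact: forallP. Qed.
Lemma nlekxP m D : reflect (exists i a, D i = Some a /\ a < m i) (~~ lekx m D).
Proof.
apply: (iffP forallPn) => [[i Hi]|[i [a [Ha Hl]]]].
  exists i; move: Hi; case: (D i) => [a|] //= Hi; exists a; split => //; lia.
exists i; rewrite Ha; lia.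
Qed.
Lemma nkP m n : (forall i, m i = n i) -> m = n.
Proof. by move=> H; apply/ffunP. Qed.
End NkLemmas.

Ltac nksimp := rewrite ?(addkE, subkE, joinkE, nk0E, meetxE).
Ltac nkeq := apply: nkP => i; nksimp.
Lemma min_cases a b : (a <= b /\ minn a b = a) \/ (b < a /\ minn a b = b).
Proof. case: (leqP a b) => H; [left|right]; split => //; lia. Qed.
Ltac clear_all := repeat match goal with H : _ |- _ => clear H end.
Ltac mlia := clear_all; repeat (match goal with |- context[minn ?a ?b] =>
  case: (min_cases a b) => [[? ->]|[? ->]] end); lia.
Section KG.
Variables (k : nat) (L : kgraph k).
Local Notation M := (kmor L).
Local Notation r := (@kr k L).
Local Notation s := (@ks k L).
Local Notation d := (@kd k L).
Local Notation comp := (@kcomp k L).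
Local Notation kid := (@kid k L).

Lemma addk_cancel (a b c : Nk k) : addk a b = addk a c -> b = c.
Proof. move=> H; nkeq; move/ffunP: H => /(_ i); nksimp; lia. Qed.

Lemma deg0_id (f : M) : d f = nk0 k -> f = kid (r f) /\ s f = r f.
Proof.
move=> Hd.
have Ha : d f = addk (nk0 k) (nk0 k) by rewrite Hd; nkeq.
have [[p1 p2] [_ Hu]] := kfact Ha.
have E1 : (p1, p2) = (kid (r f), f).
  by apply: Hu; rewrite /= ks_id kcomp_idl kd_id Hd.
have E2 : (p1, p2) = (f, kid (s f)).
  by apply: Hu; rewrite /= kr_id kcomp_idr kd_id Hd.
rewrite E1 in E2; case: E2 => E3 E4; split; first by rewrite E3.
by rewrite -{1}E3 ks_id.
Qed.

Lemma fact_uniq (p1 p2 q1 q2 : M) : s p1 = r p2 -> s q1 = r q2 ->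
  comp p1 p2 = comp q1 q2 -> d p1 = d q1 -> p1 = q1 /\ p2 = q2.
Proof.
move=> Hp Hq E Hd.
have Ha : d (comp p1 p2) = addk (d p1) (d p2) by rewrite kd_comp.
have Hd2 : d p2 = d q2.
  apply: (@addk_cancel (d p1)); by rewrite -kd_comp // E kd_comp // Hd.
have [[a b] [_ Hu]] := kfact Ha.
have E1 : (a, b) = (p1, p2) by apply: Hu.
have E2 : (a, b) = (q1, q2) by apply: Hu; rewrite /= Hq -E Hd Hd2.
by rewrite E1 in E2; case: E2.
Qed.

Lemma fact_ex (f : M) (a : Nk k) : lek a (d f) ->
  exists f1 f2, [/\ s f1 = r f2, f = comp f1 f2, d f1 = a & d f2 = subk (d f) a].
Proof.
move=> /lekP Hl.
have Ha : d f = addk a (subk (d f) a) by nkeq; have := Hl i; lia.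
have [[f1 f2] [[H1 [H2 [H3 H4]]] _]] := kfact Ha.
by exists f1, f2.
Qed.

Definition segP (f : M) (a b : Nk k) (g : M) := exists f1 f3,
    s f1 = r g /\ s g = r f3 /\ f = comp f1 (comp g f3) /\
    d f1 = a /\ d g = subk b a.

Lemma seg_spec (f : M) (a b : Nk k) : lek a b -> lek b (d f) -> segP f a b (seg f a b).
Proof.
move=> Hab Hbf.
rewrite /seg; apply: epsilon_spec.
have [f1 [h [H1 H2 H3 H4]]] := fact_ex (a:=a) (f:=f) (introT (lekP _ _) (fun i => leq_trans (elimT (lekP _ _) Hab i) (elimT (lekP _ _) Hbf i))).
have Hl : lek (subk b a) (d h).
  apply/lekP => i; rewrite H4; nksimp; move/lekP: Hbf => /(_ i); lia.
have [g [f3 [G1 G2 G3 G4]]] := fact_ex Hl.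
exists g, f1, f3; repeat split => //.
- by rewrite H1 G2 kr_comp.
- by rewrite H2 G2.
Qed.

Lemma seg_deg (f : M) a b : lek a b -> lek b (d f) -> d (seg f a b) = subk b a.
Proof. by move=> H1 H2; have [? [? [? [? [? [? ?]]]]]] := seg_spec H1 H2. Qed.

Lemma seg_eq (f1 g f3 : M) a b : s f1 = r g -> s g = r f3 -> d f1 = a ->
  d g = subk b a -> lek a b -> seg (comp f1 (comp g f3)) a b = g.
Proof.
move=> H1 H2 H3 H4 Hab.
have Hb : lek b (d (comp f1 (comp g f3))).
  rewrite kd_comp ?kd_comp ?kr_comp // H3 H4; apply/lekP => i; nksimp.
  move/lekP: Hab => /(_ i); lia.
have [f1' [f3' [K1 [K2 [K3 [K4 K5]]]]]] := seg_spec Hab Hb.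
have C1 : s f1 = r (comp g f3) by rewrite kr_comp.
have C2 : s f1' = r (comp (seg (comp f1 (comp g f3)) a b) f3') by rewrite kr_comp.
have [_ E] := fact_uniq C1 C2 K3 (esym (etrans K4 (esym H3))).
have [E2 _] := fact_uniq H2 K2 E (etrans H4 (esym K5)).
by rewrite -E2.
Qed.

Lemma subk0 (m : Nk k) : subk m (nk0 k) = m. Proof. by nkeq; lia. Qed.
Lemma addk0 (m : Nk k) : addk m (nk0 k) = m. Proof. by nkeq; lia. Qed.
Lemma add0k (m : Nk k) : addk (nk0 k) m = m. Proof. by nkeq; lia. Qed.
Lemma lek0 (m : Nk k) : lek (nk0 k) m. Proof. by apply/lekP => i; nksimp. Qed.
Lemma lekk (m : Nk k) : lek m m. Proof. by apply/lekP => i. Qed.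
Lemma lek_trans (a b c : Nk k) : lek a b -> lek b c -> lek a c.
Proof. move=> /lekP H1 /lekP H2; apply/lekP => i; exact: leq_trans (H1 i) (H2 i). Qed.

Lemma seg_full (f : M) : seg f (nk0 k) (d f) = f.
Proof.
have := @seg_eq (kid (r f)) f (kid (s f)) (nk0 k) (d f).
rewrite kcomp_idr kcomp_idl; apply => //; rewrite ?ks_id ?kr_id ?kd_id ?subk0 //.
exact: lek0.
Qed.

Lemma seg_left (g h : M) a b : s g = r h -> lek a b -> lek b (d g) ->
  seg (comp g h) a b = seg g a b.
Proof.
move=> Hgh Hab Hb.
have [f1 [f3 [K1 [K2 [K3 [K4 K5]]]]]] := seg_spec Hab Hb.
have Hs3 : s f3 = r h by rewrite -Hgh K3 ks_comp ?ks_comp // kr_comp.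
rewrite {1}K3 -!kcomp_assoc ?kr_comp //; last by rewrite ks_comp.
apply: seg_eq => //; by rewrite kr_comp.
Qed.

Lemma seg_right (g h : M) a b : s g = r h -> lek (d g) a -> lek a b ->
  lek b (addk (d g) (d h)) ->
  seg (comp g h) a b = seg h (subk a (d g)) (subk b (d g)).
Proof.
move=> Hgh Ha Hab Hb.
have Hab' : lek (subk a (d g)) (subk b (d g)).
  apply/lekP => i; nksimp; move/lekP: Hab => /(_ i); lia.
have Hb' : lek (subk b (d g)) (d h).
  apply/lekP => i; nksimp; move/lekP: Hb => /(_ i); nksimp; lia.
have [f1 [f3 [K1 [K2 [K3 [K4 K5]]]]]] := seg_spec Hab' Hb'.
have Hr1 : s g = r f1 by rewrite Hgh K3 kr_comp // kr_comp.
rewrite {1}K3 kcomp_assoc ?kr_comp //.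
apply: seg_eq => //.
- by rewrite ks_comp.
- rewrite kd_comp ?K4 //.
  nkeq; move/lekP: Ha => /(_ i); lia.
- rewrite K5; nkeq; move/lekP: Ha => /(_ i); lia.
Qed.

Lemma seg_split (f : M) a b c : lek a b -> lek b c -> lek c (d f) ->
  s (seg f a b) = r (seg f b c) /\ seg f a c = comp (seg f a b) (seg f b c).
Proof.
move=> Hab Hbc Hc.
have Hac := lek_trans Hab Hbc.
have [f1 [f3 [K1 [K2 [K3 [K4 K5]]]]]] := seg_spec Hac Hc.
set g := seg f a c in K1 K2 K3 K5 *.
have Hl : lek (subk b a) (d g).
  rewrite K5; apply/lekP => i; nksimp; move/lekP: Hbc => /(_ i); lia.
have [g1 [g2 [G1 G2 G3 G4]]] := fact_ex Hl.
have Hs2 : s g2 = r f3 by rewrite -K2 G2 ks_comp.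
have Hf1g1 : s f1 = r g1 by rewrite K1 G2 kr_comp.
have Hg1 : s g1 = r (comp g2 f3) by rewrite kr_comp.
have E1 : seg f a b = g1.
  rewrite K3 G2 -kcomp_assoc //; apply: seg_eq => //.
have E2 : seg f b c = g2.
  rewrite K3 G2 -kcomp_assoc // kcomp_assoc //.
  apply: seg_eq => //.
  - by rewrite ks_comp.
  - rewrite kd_comp // K4 G3; nkeq; move/lekP: Hab => /(_ i); lia.
  - rewrite G4 K5; nkeq; move/lekP: Hab => /(_ i); lia.
by rewrite E1 E2 G2.
Qed.

Lemma seg_r0 (f : M) b : lek b (d f) -> r (seg f (nk0 k) b) = r f.
Proof.
move=> Hb.
have [f1 [f3 [K1 [K2 [K3 [K4 K5]]]]]] := seg_spec (lek0 b) Hb.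
have [_ E] := deg0_id K4.
by rewrite {2}K3 kr_comp ?kr_comp // -K1 E.
Qed.

End KG.
Definition and3_1 (A B C : Prop) (H : [/\ A, B & C]) : A := let: And3 a _ _ := H in a.
Section Paths.
Variables (k : nat) (L : kgraph k).
Local Notation M := (kmor L).
Local Notation r := (@kr k L).
Local Notation s := (@ks k L).
Local Notation d := (@kd k L).
Local Notation comp := (@kcomp k L).
Local Notation kid := (@kid k L).
Local Notation P := (rpath L).
Local Notation "0" := (nk0 k).

Lemma lekx_trans (a b : Nk k) D : lek a b -> lekx b D -> lekx a D.
Proof.
move=> /lekP H /lekxP H2; apply/lekxP => i; move: (H i) (H2 i).
case: (D i) => // *; lia.
Qed.
Lemma lekx_meet (m : Nk k) D : lekx (meetx m D) D.
Proof. apply/lekxP => i; nksimp; case: (D i) => // *; lia. Qed.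
Lemma lek_meet (m : Nk k) D : lek (meetx m D) m.
Proof. apply/lekP => i; nksimp; case: (D i) => // *; lia. Qed.
Lemma meetx_id (m : Nk k) D : lekx m D -> meetx m D = m.
Proof. move=> /lekxP H; nkeq; move: (H i); case: (D i) => // *; lia. Qed.
Lemma meetx_mono (m n : Nk k) D : lek m n -> lek (meetx m D) (meetx n D).
Proof. move=> /lekP H; apply/lekP => i; nksimp; move: (H i); case: (D i) => // *; lia. Qed.
Lemma lekx0 D : lekx 0 D.
Proof. apply/lekxP => i; nksimp; case: (D i) => //. Qed.
Lemma meetx0 D : meetx 0 D = 0.
Proof. by rewrite meetx_id // lekx0. Qed.

Lemma P_tri (x : P) a b c : graph_morph x -> lek a b -> lek b c -> lekx c (pdeg x) ->
  [/\ d (pmap x a b) = subk b a, s (pmap x a b) = r (pmap x b c) &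
      pmap x a c = comp (pmap x a b) (pmap x b c)].
Proof. by move=> [_ H]; apply: H. Qed.

Lemma P_r (x : P) a b : graph_morph x -> lek a b -> lekx b (pdeg x) ->
  r (pmap x a b) = vert x a.
Proof.
move=> G Hab Hb.
have [_ H1 H2] := P_tri G (lekk a) Hab Hb.
by rewrite H2 kr_comp.
Qed.

Lemma P_s (x : P) a b : graph_morph x -> lek a b -> lekx b (pdeg x) ->
  s (pmap x a b) = vert x b.
Proof.
move=> G Hab Hb.
have [_ H1 H2] := P_tri G Hab (lekk b) Hb.
by rewrite H2 ks_comp // (proj1 G) // ks_id.
Qed.

Lemma P_seg (x : P) a b c : graph_morph x -> lek a b -> lek b c -> lekx c (pdeg x) ->
  pmap x a b = seg (pmap x 0 c) a b.
Proof.
move=> G Hab Hbc Hc.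
have [D1 S1 E1] := P_tri G (lek0 a) (lek_trans Hab Hbc) Hc.
have [D2 S2 E2] := P_tri G Hab Hbc Hc.
have Hb := lekx_trans Hbc Hc.
rewrite E1 E2 seg_eq //.
- by rewrite P_s ?P_r ?lek0 // (lekx_trans Hab Hb).
- by rewrite D1 subk0.
Qed.

Lemma shift_pdeg (p : Nk k) (x : P) i :
  pdeg (shift p x) i = omap (fun a => a - p i) (pdeg x i).
Proof. by rewrite /= ffunE. Qed.

Lemma lekx_shiftE (p t : Nk k) (x : P) : lekx p (pdeg x) ->
  lekx t (pdeg (shift p x)) = lekx (addk t p) (pdeg x).
Proof.
move=> /lekxP H; apply/lekxP/lekxP => H2 i; move: (H i) (H2 i);
  rewrite shift_pdeg; nksimp; case: (pdeg x i) => //= *; lia.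
Qed.

Lemma GM_shift (p : Nk k) (x : P) : graph_morph x -> lekx p (pdeg x) ->
  graph_morph (shift p x).
Proof.
move=> G Hp; split.
  move=> q Hq; rewrite /vert /=; apply: (proj1 G).
  by rewrite -lekx_shiftE.
move=> a b c Hab Hbc Hc; rewrite /=.
have L1 : forall u v : Nk k, lek u v -> lek (addk u p) (addk v p).
  move=> u v /lekP H; apply/lekP => i; nksimp; move: (H i); lia.
have [H1 H2 H3] := P_tri G (L1 _ _ Hab) (L1 _ _ Hbc) (etrans (esym (lekx_shiftE c Hp)) Hc).
split => //; rewrite H1; nkeq; lia.
Qed.

Lemma BP_shift (p : Nk k) (x : P) : boundary_path x -> lekx p (pdeg x) ->
  boundary_path (shift p x).
Proof.
move=> [G [nx [Hnx Hb]]] Hp; split; first exact: GM_shift.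
exists (subk (joink nx p) p); split.
  rewrite lekx_shiftE //; move/lekxP: Hnx => H1; move/lekxP: Hp => H2.
  apply/lekxP => i; move: (H1 i) (H2 i); nksimp; case: (pdeg x i) => //= *; lia.
move=> q Hq Hqx i Hi f Hf.
apply: (Hb (addk q p)) => //.
- move/lekP: Hq => H; apply/lekP => i'; move: (H i'); nksimp; lia.
- by rewrite -lekx_shiftE.
- move: Hi; rewrite shift_pdeg; move/lekxP: Hp => /(_ i); nksimp.
  case: (pdeg x i) => //= a Ha [E]; congr Some; lia.
Qed.

Lemma vert_shift (p : Nk k) (x : P) q : vert (shift p x) q = vert x (addk q p).
Proof. by []. Qed.
Lemma pmap_shift (p : Nk k) (x : P) a b : pmap (shift p x) a b = pmap x (addk a p) (addk b p).
Proof. by []. Qed.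

Lemma prepend_pdeg (f : M) (x : P) i :
  pdeg (prepend f x) i = omap (addn (d f i)) (pdeg x i).
Proof. by rewrite /= ffunE. Qed.

Section Prep.
Variables (f : M) (x : P).
Hypothesis G : graph_morph x.
Hypothesis Hfx : s f = vert x 0.
Local Notation z := (prepend f x).

Lemma Z2 a b c : lek a b -> lekx b (pdeg z) -> lek (subk (joink b (d f)) (d f)) c ->
  lekx c (pdeg x) -> pmap z a b = seg (comp f (pmap x 0 c)) a b.
Proof.
move=> Hab Hb Hc0 Hc.
set c0 := subk (joink b (d f)) (d f) in Hc0 *.
rewrite /=.
have [D1 S1 E1] := P_tri G (lek0 c0) Hc0 Hc.
have Hf0 : s f = r (pmap x 0 c0) by rewrite Hfx P_r // ?lek0 // (lekx_trans Hc0 Hc).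
rewrite E1 kcomp_assoc // [RHS]seg_left //.
- by rewrite ks_comp.
- rewrite kd_comp // D1 subk0; apply/lekP => i; nksimp; lia.
Qed.

Lemma Z_pdeg_le c : lekx c (pdeg x) -> lekx (addk (d f) c) (pdeg z).
Proof.
move=> /lekxP H; apply/lekxP => i; move: (H i); rewrite prepend_pdeg; nksimp.
case: (pdeg x i) => //= *; lia.
Qed.

Lemma c0_le b : lekx b (pdeg z) -> lekx (subk (joink b (d f)) (d f)) (pdeg x).
Proof.
move=> /lekxP H; apply/lekxP => i; move: (H i); rewrite prepend_pdeg; nksimp.
case: (pdeg x i) => //= *; lia.
Qed.

Lemma GM_prepend : graph_morph z.
Proof.
split.
  move=> p Hp; rewrite /vert; set g := pmap z p p.
  have Hd : d g = 0.
    have Hc0 := c0_le Hp.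
    have [D1 _ _] := P_tri G (lek0 _) (lekk _) Hc0.
    rewrite /g /= seg_deg ?lekk //; first by nkeq; lia.
    rewrite kd_comp; last by rewrite Hfx P_r ?lek0.
    rewrite D1 subk0; apply/lekP => i; nksimp; lia.
  by rewrite {1}(proj1 (deg0_id Hd)).
move=> a b c Hab Hbc Hc.
set c0 := subk (joink c (d f)) (d f).
have Hc0 : lekx c0 (pdeg x) by apply: c0_le.
have Lc : forall u, lek u c -> lek (subk (joink u (d f)) (d f)) c0.
  move=> u /lekP H; apply/lekP => i; move: (H i); nksimp; lia.
have Hb := lekx_trans Hbc Hc.
rewrite (Z2 Hab Hb (Lc _ Hbc) Hc0) (Z2 Hbc Hc (lekk _) Hc0)
        (Z2 (lek_trans Hab Hbc) Hc (Lc _ (lekk _)) Hc0).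
have Hs : s f = r (pmap x 0 c0) by rewrite Hfx P_r ?lek0.
have Hdc : lek c (d (comp f (pmap x 0 c0))).
  rewrite kd_comp // (and3_1 (P_tri G (lek0 _) (lekk _) Hc0)) subk0.
  apply/lekP => i; nksimp; lia.
have [S E] := seg_split Hab Hbc Hdc.
by split => //; rewrite seg_deg // (lek_trans Hbc Hdc).
Qed.

Lemma Z_vert c : lekx c (pdeg x) -> vert z (addk (d f) c) = vert x c.
Proof.
move=> Hc; rewrite /vert.
have Hc0 : lek (subk (joink (addk (d f) c) (d f)) (d f)) c.
  apply/lekP => i; nksimp; lia.
have Hs : s f = r (pmap x 0 c) by rewrite Hfx P_r ?lek0.
have Hdc : d (pmap x 0 c) = c by rewrite (and3_1 (P_tri G (lek0 _) (lekk _) Hc)) subk0.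
rewrite (Z2 (lekk _) (Z_pdeg_le Hc) Hc0 Hc) seg_right //.
- have -> : subk (addk (d f) c) (d f) = c by nkeq; lia.
  by rewrite -P_seg ?lekk.
- by apply/lekP => i; nksimp; lia.
- exact: lekk.
- by rewrite Hdc lekk.
Qed.

Lemma Z3 a c : lek a (d f) -> lekx c (pdeg x) ->
  pmap z a (addk (d f) c) = comp (seg f a (d f)) (pmap x 0 c).
Proof.
move=> Ha Hc.
have Hc0 : lek (subk (joink (addk (d f) c) (d f)) (d f)) c.
  apply/lekP => i; nksimp; lia.
have Hs : s f = r (pmap x 0 c) by rewrite Hfx P_r ?lek0.
have Hdc : d (pmap x 0 c) = c by rewrite (and3_1 (P_tri G (lek0 _) (lekk _) Hc)) subk0.
have Hle : lek (d f) (addk (d f) c) by apply/lekP => i; nksimp; lia.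
have Htop : lek (addk (d f) c) (d (comp f (pmap x 0 c))) by rewrite kd_comp // Hdc lekk.
rewrite (Z2 (lek_trans Ha Hle) (Z_pdeg_le Hc) Hc0 Hc).
have [_ ->] := seg_split Ha Hle Htop.
rewrite seg_left ?lekk // seg_right ?lekk //; last by rewrite Hdc lekk.
have -> : subk (d f) (d f) = 0 by nkeq; lia.
have -> : subk (addk (d f) c) (d f) = c by nkeq; lia.
have E := seg_full (pmap x 0 c); rewrite Hdc in E; by rewrite E.
Qed.

Lemma Z4 a b : lek a b -> lek b (d f) -> pmap z a b = seg f a b.
Proof.
move=> Hab Hb.
have Hx0 : lekx 0 (pdeg x) := lekx0 _.
have Hs : s f = r (pmap x 0 0) by rewrite Hfx P_r ?lek0.
have Hbz : lekx b (pdeg z).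
  apply: lekx_trans (Z_pdeg_le Hx0); by rewrite addk0.
rewrite (Z2 Hab Hbz _ Hx0) ?seg_left //.
apply/lekP => i; move/lekP: Hb => /(_ i); nksimp; lia.
Qed.

End Prep.

Lemma BP_prepend (f : M) (x : P) : boundary_path x -> s f = vert x 0 ->
  boundary_path (prepend f x).
Proof.
move=> [G [nx [Hnx Hb]]] Hfx; split; first exact: GM_prepend.
exists (addk (d f) nx); split; first exact: Z_pdeg_le.
move=> q Hq Hqz i Hi g Hg.
have Eq : q = addk (d f) (subk q (d f)).
  apply: nkP => j; nksimp; move/lekP: Hq => /(_ j); nksimp; lia.
have Hqx : lekx (subk q (d f)) (pdeg x).
  move/lekxP: Hqz => H; apply/lekxP => j; move: (H j); rewrite prepend_pdeg; nksimp.
  case: (pdeg x j) => //= *; lia.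
apply: (Hb (subk q (d f))) => //.
- move/lekP: Hq => H; apply/lekP => j; move: (H j); nksimp; lia.
- move: Hi; rewrite prepend_pdeg; nksimp; case: (pdeg x i) => //= a [E]; congr Some; lia.
- by rewrite Hg Eq Z_vert // -Eq.
Qed.

End Paths.
Section Specs.
Variables (k : nat) (L : kgraph k).
Local Notation M := (kmor L).
Local Notation r := (@kr k L).
Local Notation s := (@ks k L).
Local Notation d := (@kd k L).
Local Notation comp := (@kcomp k L).
Local Notation kid := (@kid k L).
Local Notation P := (rpath L).
Local Notation "0" := (nk0 k).

Lemma at_i (m n : Nk k) i : m = n -> m i = n i. Proof. by move->. Qed.
Lemma lek_i (m n : Nk k) i : lek m n -> m i <= n i. Proof. by move/lekP. Qed.

Lemma lekx_meetE (m : Nk k) D : lekx m D = (meetx m D == m).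
Proof.
apply/idP/eqP; first exact: meetx_id.
move=> <-; exact: lekx_meet.
Qed.

Lemma lekx_subE (m : Nk k) D : lekx m D = (subk m (meetx m D) == 0).
Proof.
rewrite lekx_meetE; apply/eqP/eqP => H.
  by rewrite H; nkeq; lia.
nkeq; move: (at_i i H); nksimp; case: (D i) => [a|] //= *; lia.
Qed.

Lemma GM_of (x : P) : boundary_path x -> graph_morph x. Proof. by case. Qed.

Lemma lr_spec (u : M) (x : P) m n : boundary_path x -> lek m n ->
  ~~ lekx n (pdeg x) -> lekx m (pdeg x) -> s u = vert x m ->
  let z := prepend u (shift m x) in let N := subk (addk (d u) n) m in
  [/\ boundary_path z, ~~ lekx N (pdeg z),
    pmap z 0 (meetx N (pdeg z)) = comp u (pmap x m (meetx n (pdeg x))),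
    subk N (meetx N (pdeg z)) = subk n (meetx n (pdeg x)) &
    (vert z (meetx N (pdeg z)) = vert x (meetx n (pdeg x)) /\ vert z 0 = r u)].
Proof.
move=> Bx Hmn Hn Hm Hu z N.
have G := GM_of Bx.
have Gw := GM_shift G Hm.
have Hw0 : s u = vert (shift m x) 0 by rewrite vert_shift add0k.
have Bz : boundary_path z by apply: BP_prepend => //; exact: BP_shift.
have Gz := GM_of Bz.
have Hmnx : lek m (meetx n (pdeg x)).
  apply/lekP => i; move: (lek_i i Hmn); move/lekxP: Hm => /(_ i); nksimp.
  case: (pdeg x i) => //=; mlia.
have EN : meetx N (pdeg z) = addk (d u) (subk (meetx n (pdeg x)) m).
  nkeq; move: (lek_i i Hmn); move/lekxP: Hm => /(_ i).
  rewrite prepend_pdeg shift_pdeg; nksimp; case: (pdeg x i) => //=; mlia.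
have Hc : lekx (subk (meetx n (pdeg x)) m) (pdeg (shift m x)).
  rewrite lekx_shiftE //.
  have -> : addk (subk (meetx n (pdeg x)) m) m = meetx n (pdeg x).
    by nkeq; move: (lek_i i Hmnx); nksimp; mlia.
  exact: lekx_meet.
have E4 : pmap z 0 (meetx N (pdeg z)) = comp u (pmap x m (meetx n (pdeg x))).
  rewrite EN (Z3 Gw Hw0 (lek0 _) Hc) seg_full pmap_shift add0k.
  have -> : addk (subk (meetx n (pdeg x)) m) m = meetx n (pdeg x).
    by nkeq; move: (lek_i i Hmnx); nksimp; mlia.
  done.
have HNz : lekx (meetx N (pdeg z)) (pdeg z) := lekx_meet _ _.
have Hnx : lekx (meetx n (pdeg x)) (pdeg x) := lekx_meet _ _.
have Hsu : s u = r (pmap x m (meetx n (pdeg x))) by rewrite Hu P_r.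
split => //.
- apply/nlekxP; move/nlekxP: Hn => [i [a [Ha Hlt]]].
  exists i, (d u i + (a - m i)); split.
    by rewrite prepend_pdeg shift_pdeg Ha.
  move: Hlt; move/lekxP: Hm => /(_ i); rewrite Ha; nksimp; mlia.
- rewrite EN; nkeq; move: (lek_i i Hmnx) (lek_i i (lek_meet n (pdeg x))) (lek_i i Hmn).
  nksimp; mlia.
- split.
  + rewrite -(P_s Gz (lek0 _) HNz) E4 ks_comp // P_s //.
  + rewrite -(P_r Gz (lek0 _) HNz) E4 kr_comp //.
Qed.

Lemma rr_spec (x y : P) m n p q : boundary_path x -> boundary_path y ->
  lek m n -> lek p q -> ~~ lekx n (pdeg x) -> ~~ lekx q (pdeg y) ->
  Veq x n y p ->
  let z := prepend (pmap x 0 (meetx n (pdeg x))) (shift (meetx p (pdeg y)) y) in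
  let N := subk (addk n q) p in
  [/\ boundary_path z, ~~ lekx N (pdeg z), meetx m (pdeg z) = meetx m (pdeg x),
    pmap z (meetx m (pdeg x)) (meetx N (pdeg z)) =
      comp (pmap x (meetx m (pdeg x)) (meetx n (pdeg x)))
           (pmap y (meetx p (pdeg y)) (meetx q (pdeg y))) &
    [/\ subk N (meetx N (pdeg z)) = subk q (meetx q (pdeg y)),
        vert z (meetx N (pdeg z)) = vert y (meetx q (pdeg y)),
        vert z (meetx m (pdeg x)) = vert x (meetx m (pdeg x)) &
        lekx m (pdeg z) = lekx m (pdeg x)]].
Proof.
move=> Bx By Hmn Hpq Hn Hq [V1 V2] z N.
have G := GM_of Bx. have Gy := GM_of By.
set nx := meetx n (pdeg x). set py := meetx p (pdeg y). set qy := meetx q (pdeg y).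
set mx := meetx m (pdeg x).
set f0 := pmap x 0 nx.
have Hnx : lekx nx (pdeg x) := lekx_meet _ _.
have Hpy : lekx py (pdeg y) := lekx_meet _ _.
have Hqy : lekx qy (pdeg y) := lekx_meet _ _.
have Hpqy : lek py qy := meetx_mono _ Hpq.
have Hmnx : lek mx nx := meetx_mono _ Hmn.
have Df0 : d f0 = nx by rewrite (and3_1 (P_tri G (lek0 _) (lekk _) Hnx)) subk0.
have Gw := GM_shift Gy Hpy.
have Hw0 : s f0 = vert (shift py y) 0 by rewrite vert_shift add0k P_s ?lek0.
have Bz : boundary_path z by apply: BP_prepend => //; exact: BP_shift.
have Gz := GM_of Bz.
have V2i := fun i => at_i i V2.
have EM : meetx m (pdeg z) = mx.
  nkeq; move: (V2i i) (lek_i i Hmn) (lek_i i Hpq); rewrite prepend_pdeg shift_pdeg Df0.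
  nksimp; case: (pdeg x i) => [a|]; case: (pdeg y i) => [b|] /=; mlia.
have EN : meetx N (pdeg z) = addk nx (subk qy py).
  nkeq; move: (V2i i) (lek_i i Hmn) (lek_i i Hpq); rewrite prepend_pdeg shift_pdeg Df0.
  nksimp; case: (pdeg x i) => [a|]; case: (pdeg y i) => [b|] /=; mlia.
have Hc : lekx (subk qy py) (pdeg (shift py y)).
  rewrite lekx_shiftE //.
  have -> : addk (subk qy py) py = qy by nkeq; move: (lek_i i Hpqy); nksimp; mlia.
  done.
have E4 : pmap z mx (meetx N (pdeg z)) = comp (pmap x mx nx) (pmap y py qy).
  have E := Z3 Gw Hw0 (a := mx) _ Hc.
  rewrite Df0 in E; rewrite EN E //.
  rewrite pmap_shift add0k -(P_seg G Hmnx (lekk _) Hnx).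
  have -> : addk (subk qy py) py = qy by nkeq; move: (lek_i i Hpqy); nksimp; mlia.
  done.
have HNz : lekx (meetx N (pdeg z)) (pdeg z) := lekx_meet _ _.
have Hmz : lek mx (meetx N (pdeg z)).
  rewrite -EM; apply: meetx_mono; apply/lekP => i; nksimp.
  move: (lek_i i Hmn) (lek_i i Hpq); mlia.
have Hxy : s (pmap x mx nx) = r (pmap y py qy) by rewrite P_s // P_r.
split => //.
- apply/nlekxP; move/nlekxP: Hq => [i [b [Hb Hlt]]].
  exists i, (nx i + (b - py i)); split.
    by rewrite prepend_pdeg shift_pdeg Hb Df0.
  move: Hlt (V2i i) (lek_i i Hmn) (lek_i i Hpq); rewrite /nx /py; nksimp; rewrite Hb.
  case: (pdeg x i) => [a|] /=; mlia.
- split.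
  + rewrite EN; nkeq; move: (V2i i) (lek_i i Hmn) (lek_i i Hpq) (lek_i i Hpqy)
     (lek_i i (lek_meet n (pdeg x))) (lek_i i (lek_meet q (pdeg y))).
    rewrite /nx /py /qy; nksimp; case: (pdeg x i) => [a|]; case: (pdeg y i) => [b|] /=; mlia.
  + rewrite -(P_s Gz Hmz HNz) E4 ks_comp // P_s //.
  + rewrite -(P_r Gz Hmz HNz) E4 kr_comp // P_r //.
  + by rewrite !lekx_meetE EM.
Qed.

End Specs.
Definition and3_3 (A B C : Prop) (H : [/\ A, B & C]) : C := let: And3 _ _ c := H in c.
Ltac nksimp0 := rewrite ?(addkE, subkE, joinkE, nk0E).

Section Main.
Variables (k : nat) (L : kgraph k).
Local Notation M := (kmor L).
Local Notation r := (@kr k L).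
Local Notation s := (@ks k L).
Local Notation d := (@kd k L).
Local Notation comp := (@kcomp k L).
Local Notation kid := (@kid k L).
Local Notation P := (rpath L).
Local Notation "0" := (nk0 k).
Local Notation OV := (@obar_valid k L).
Local Notation MV := (@mbar_valid k L).
Local Notation OE := (@obar_eq k L).
Local Notation ME := (@mbar_eq k L).
Local Notation RB := (@rbar k L).
Local Notation SB := (@sbar k L).
Local Notation IB := (@idbar k L).
Local Notation CB := (@compbar k L).

Lemma Veq_sym (x y : P) m p : Veq x m y p -> Veq y p x m.
Proof. move=> [E1 E2]; split; congruence. Qed.
Lemma Veq_trans (x y w : P) m p a : Veq x m y p -> Veq y p w a -> Veq x m w a.
Proof. move=> [E1 E2] [E3 E4]; split; congruence. Qed.

Lemma oe_refl a : OE a a.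
Proof. by case: a => [v|[x m]]. Qed.
Lemma oe_sym a b : OE a b -> OE b a.
Proof. case: a => [v|[x m]]; case: b => [w|[y p]] //=.
  all: first [by move=> -> | exact: Veq_sym | by move=> []]. Qed.
Lemma oe_trans a b e : OE a b -> OE b e -> OE a e.
Proof.
case: a => [v|[x m]]; case: b => [w|[y p]]; case: e => [u|[z q]] //=;
  first [by move=> -> | exact: Veq_trans | by move=> [] | by move=> _ []].
Qed.
Lemma me_refl f : ME f f.
Proof. by case: f => [u|[[x m] n]]. Qed.
Lemma me_sym f g : ME f g -> ME g f.
Proof.
case: f => [u|[[x m] n]]; case: g => [v|[[y p] q]] //=.
all: first [by move=> -> | by move=> [] | move=> [E1 E2 E3]; split; congruence].
Qed.
Lemma me_trans f g h : ME f g -> ME g h -> ME f h.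
Proof.
case: f => [u|[[x m] n]]; case: g => [v|[[y p] q]]; case: h => [w|[[z a] b]] //=.
all: first [by move=> -> | by move=> [] | by move=> _ [] |
  move=> [E1 E2 E3] [E4 E5 E6]; split; congruence].
Qed.

Lemma dec_lr (u : M) (x : P) m n : OE (SB (inl u)) (RB (inr (x, m, n))) ->
  lekx m (pdeg x) /\ s u = vert x m.
Proof. rewrite /=; by case: ifP. Qed.
Lemma dec_rr (x y : P) m n p q : OE (SB (inr (x, m, n))) (RB (inr (y, p, q))) ->
  ~~ lekx p (pdeg y) /\ Veq x n y p.
Proof. rewrite /=; case: ifP => // H E; by rewrite H. Qed.

Lemma Pr_meet (x : P) m n : graph_morph x -> lek m n ->
  r (pmap x (meetx m (pdeg x)) (meetx n (pdeg x))) = vert x (meetx m (pdeg x)).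
Proof. move=> G H; apply: P_r => //; [exact: meetx_mono | exact: lekx_meet]. Qed.
Lemma Ps_meet (x : P) m n : graph_morph x -> lek m n ->
  s (pmap x (meetx m (pdeg x)) (meetx n (pdeg x))) = vert x (meetx n (pdeg x)).
Proof. move=> G H; apply: P_s => //; [exact: meetx_mono | exact: lekx_meet]. Qed.

Lemma r_resp' f g : MV f -> MV g -> ME f g -> OE (RB f) (RB g).
Proof.
case: f => [u|[[x m] n]]; case: g => [v|[[y p] q]] //=.
  by move=> _ _ ->.
move=> [Bx Hmn Hn] [By Hpq Hq] [E1 E2 E3].
have Hl : lekx m (pdeg x) = lekx p (pdeg y) by rewrite !lekx_subE E2.
have Ex : vert x (meetx m (pdeg x)) = vert y (meetx p (pdeg y)).
  by rewrite -(Pr_meet (GM_of Bx) Hmn) -(Pr_meet (GM_of By) Hpq) E1.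
rewrite Hl; case: ifP => H /=.
  have Hx : lekx m (pdeg x) by rewrite Hl.
  by rewrite (meetx_id Hx) (meetx_id H) in Ex.
by split.
Qed.

Lemma s_resp' f g : MV f -> MV g -> ME f g -> OE (SB f) (SB g).
Proof.
case: f => [u|[[x m] n]]; case: g => [v|[[y p] q]] //=.
  by move=> _ _ ->.
move=> [Bx Hmn Hn] [By Hpq Hq] [E1 E2 E3].
split.
  by rewrite -(Ps_meet (GM_of Bx) Hmn) -(Ps_meet (GM_of By) Hpq) E1.
have Dd : subk (meetx n (pdeg x)) (meetx m (pdeg x)) = subk (meetx q (pdeg y)) (meetx p (pdeg y)).
  rewrite -(and3_1 (P_tri (GM_of Bx) (meetx_mono _ Hmn) (lekk _) (lekx_meet _ _))).
  by rewrite -(and3_1 (P_tri (GM_of By) (meetx_mono _ Hpq) (lekk _) (lekx_meet _ _))) E1.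
apply: nkP => i; move: (at_i i E2) (at_i i E3) (at_i i Dd) (lek_i i Hmn) (lek_i i Hpq)
  (lek_i i (lek_meet m (pdeg x))) (lek_i i (lek_meet n (pdeg x))) (lek_i i (meetx_mono (pdeg x) Hmn))
  (lek_i i (lek_meet p (pdeg y))) (lek_i i (lek_meet q (pdeg y))) (lek_i i (meetx_mono (pdeg y) Hpq)).
nksimp0; mlia.
Qed.

Lemma i_resp' a b : OV a -> OV b -> OE a b -> ME (IB a) (IB b).
Proof.
case: a => [v|[x m]]; case: b => [w|[y p]] //=.
  by move=> _ _ ->.
move=> [Bx _] [By _] [V1 V2]; split => //; last by nkeq; lia.
by rewrite (proj1 (GM_of Bx)) ?lekx_meet // (proj1 (GM_of By)) ?lekx_meet // V1.
Qed.

Lemma c_valid' f g : MV f -> MV g -> OE (SB f) (RB g) -> MV (CB f g).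
Proof.
case: f => [u|[[x m] n]]; case: g => [v|[[y p] q]] //.
- move=> _ [Bx Hmn Hn] /dec_lr [Hm Hu].
  have [B1 B2 _ _ _] := lr_spec Bx Hmn Hn Hm Hu.
  split => //; exact: lek0.
- move=> [Bx Hmn Hn] [By Hpq Hq] /dec_rr [Hp V].
  have [R1 R2 _ _ _] := rr_spec Bx By Hmn Hpq Hn Hq V.
  split => //; apply/lekP => i; nksimp; move: (lek_i i Hmn) (lek_i i Hpq); mlia.
Qed.

Lemma r_comp' f g : MV f -> MV g -> OE (SB f) (RB g) -> OE (RB (CB f g)) (RB f).
Proof.
case: f => [u|[[x m] n]]; case: g => [v|[[y p] q]] //.
- by move=> _ _ /= E; rewrite kr_comp.
- move=> _ [Bx Hmn Hn] /dec_lr [Hm Hu].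
  have [_ _ _ _ [_ L7]] := lr_spec Bx Hmn Hn Hm Hu.
  by rewrite /= lekx0.
- move=> [Bx Hmn Hn] [By Hpq Hq] /dec_rr [Hp V].
  have [_ _ R3 _ [_ _ R7 R8]] := rr_spec Bx By Hmn Hpq Hn Hq V.
  rewrite /= R8; case: ifP => H /=.
    by rewrite (meetx_id H) in R7.
  by rewrite /Veq R3; split.
Qed.

Lemma s_comp' f g : MV f -> MV g -> OE (SB f) (RB g) -> OE (SB (CB f g)) (SB g).
Proof.
case: f => [u|[[x m] n]]; case: g => [v|[[y p] q]] //.
- by move=> _ _ /= E; rewrite ks_comp.
- move=> _ [Bx Hmn Hn] /dec_lr [Hm Hu].
  by have [_ _ _ L5 [L6 _]] := lr_spec Bx Hmn Hn Hm Hu.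
- move=> [Bx Hmn Hn] [By Hpq Hq] /dec_rr [Hp V].
  by have [_ _ _ _ [R5 R6 _ _]] := rr_spec Bx By Hmn Hpq Hn Hq V.
Qed.

Lemma comp_il' f : MV f -> ME (CB (IB (RB f)) f) f.
Proof.
case: f => [u|[[x m] n]].
  by rewrite /= kcomp_idl.
move=> [Bx Hmn Hn]; have G := GM_of Bx.
rewrite /=; case: ifP => Hm /=.
- have Hu : s (kid (vert x m)) = vert x m by rewrite ks_id.
  have [_ _ L3 _ _] := lr_spec Bx Hmn Hn Hm Hu.
  split.
  + have Hr := Pr_meet G Hmn; rewrite (meetx_id Hm) in Hr.
    by rewrite meetx0 L3 (meetx_id Hm) -Hr kcomp_idl.
  + by rewrite meetx0 (meetx_id Hm); nkeq; lia.
  + by rewrite kd_id; nkeq; lia.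
- have Hm' : ~~ lekx m (pdeg x) by rewrite Hm.
  have [_ _ R3 R4 _] := rr_spec Bx Bx (lekk m) Hmn Hm' Hn (conj erefl erefl).
  split.
  + rewrite R3 R4 -(and3_3 (P_tri G (lekk _) (meetx_mono _ Hmn) (lekx_meet _ _))) //.
  + by rewrite R3.
  + by nkeq; lia.
Qed.

Lemma comp_ir' f : MV f -> ME (CB f (IB (SB f))) f.
Proof.
case: f => [u|[[x m] n]].
  by rewrite /= kcomp_idr.
move=> [Bx Hmn Hn]; have G := GM_of Bx.
rewrite /=.
have [_ _ R3 R4 _] := rr_spec Bx Bx Hmn (lekk n) Hn Hn (conj erefl erefl).
split.
+ rewrite R3 R4 -(and3_3 (P_tri G (meetx_mono _ Hmn) (lekk _) (lekx_meet _ _))) //.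
+ by rewrite R3.
+ by nkeq; lia.
Qed.

Lemma c_resp_lr (u : M) (x y : P) m n p q : MV (inr (x, m, n)) -> MV (inr (y, p, q)) ->
  Peq x m n y p q -> OE (SB (inl u)) (RB (inr (x, m, n))) ->
  ME (CB (inl u) (inr (x, m, n))) (CB (inl u) (inr (y, p, q))).
Proof.
move=> [Bx Hmn Hn] [By Hpq Hq] [E1 E2 E3] /dec_lr [Hm Hu].
have Hp : lekx p (pdeg y) by rewrite lekx_subE -E2 -lekx_subE.
have Hu' : s u = vert y p.
  rewrite Hu -{1}(meetx_id Hm) -{1}(meetx_id Hp) -(Pr_meet (GM_of Bx) Hmn).
  by rewrite -(Pr_meet (GM_of By) Hpq) E1.
have [_ _ L3 _ _] := lr_spec Bx Hmn Hn Hm Hu.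
have [_ _ L3' _ _] := lr_spec By Hpq Hq Hp Hu'.
rewrite (meetx_id Hm) (meetx_id Hp) in E1.
split.
- by rewrite !meetx0 L3 L3' E1.
- by rewrite !meetx0.
- apply: nkP => i; move: (at_i i E3) (lek_i i Hmn) (lek_i i Hpq); nksimp0; mlia.
Qed.

Lemma c_resp_rr (x x' y y' : P) m n m' n' p q p' q' :
  MV (inr (x, m, n)) -> MV (inr (x', m', n')) -> MV (inr (y, p, q)) -> MV (inr (y', p', q')) ->
  Peq x m n x' m' n' -> Peq y p q y' p' q' -> OE (SB (inr (x, m, n))) (RB (inr (y, p, q))) ->
  ME (CB (inr (x, m, n)) (inr (y, p, q))) (CB (inr (x', m', n')) (inr (y', p', q'))).
Proof.
move=> Vf Vf' Vg Vg' Ef Eg Hc.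
have Sf := s_resp' Vf Vf' Ef. have Rg := r_resp' Vg Vg' Eg.
move: Vf Vf' Vg Vg' Ef Eg => [Bx Hmn Hn] [Bx' Hmn' Hn'] [By Hpq Hq] [By' Hpq' Hq']
  [F1 F2 F3] [G1 G2 G3].
move/dec_rr: (Hc) => [Hp V].
have Hp' : ~~ lekx p' (pdeg y').
  by move: Hp; rewrite !lekx_subE G2.
move: Rg; rewrite /= (negbTE Hp) (negbTE Hp') /= => Rg.
have V' : Veq x' n' y' p' by apply: Veq_trans Rg; apply: Veq_trans V; exact: Veq_sym.
have [_ _ R3 R4 _] := rr_spec Bx By Hmn Hpq Hn Hq V.
have [_ _ R3' R4' _] := rr_spec Bx' By' Hmn' Hpq' Hn' Hq' V'.
split.
- by rewrite R3 R3' R4 R4' F1 G1.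
- by rewrite R3 R3'.
- apply: nkP => i; move: (at_i i F3) (at_i i G3) (lek_i i Hmn) (lek_i i Hpq)
    (lek_i i Hmn') (lek_i i Hpq'); nksimp0; mlia.
Qed.

Lemma c_resp' f f' g g' : MV f -> MV f' -> MV g -> MV g' ->
    ME f f' -> ME g g' -> OE (SB f) (RB g) -> ME (CB f g) (CB f' g').
Proof.
move=> Vf Vf' Vg Vg' Ef Eg Hc.
destruct f as [u|[[x m] n]]; destruct f' as [u'|[[x' m'] n']];
  try (simpl in Ef; by case: Ef).
all: destruct g as [v|[[y p] q]]; destruct g' as [v'|[[y' p'] q']];
  try (simpl in Eg; by case: Eg).
- simpl in Ef, Eg; by rewrite /= Ef Eg.
- simpl in Ef; subst u'; exact: c_resp_lr.
- exact: (c_resp_rr Vf Vf' Vg Vg' Ef Eg Hc).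
Qed.

End Main.
Arguments prepend : simpl never.
Arguments shift : simpl never.
Section Assoc.
Variables (k : nat) (L : kgraph k).
Local Notation M := (kmor L).
Local Notation r := (@kr k L).
Local Notation s := (@ks k L).
Local Notation d := (@kd k L).
Local Notation comp := (@kcomp k L).
Local Notation P := (rpath L).
Local Notation "0" := (nk0 k).
Local Notation MV := (@mbar_valid k L).
Local Notation OE := (@obar_eq k L).
Local Notation ME := (@mbar_eq k L).
Local Notation RB := (@rbar k L).
Local Notation SB := (@sbar k L).
Local Notation CB := (@compbar k L).

Lemma assoc_llr (u v : M) (x : P) m n : s u = r v ->
  OE (SB (inl v)) (RB (inr (x, m, n))) -> MV (inr (x, m, n)) ->
  ME (CB (inl u) (CB (inl v) (inr (x, m, n)))) (CB (CB (inl u) (inl v)) (inr (x, m, n))).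
Proof.
move=> Huv /dec_lr [Hm Hv] [Bx Hmn Hn].
have [B1 B2 L3 _ [_ L7]] := lr_spec Bx Hmn Hn Hm Hv.
have Hu1 : s u = vert (prepend v (shift m x)) 0 by rewrite L7.
have [_ _ C3 _ _] := lr_spec B1 (lek0 _) B2 (lekx0 _) Hu1.
have Huv' : s (comp u v) = vert x m by rewrite ks_comp.
have [_ _ D3 _ _] := lr_spec Bx Hmn Hn Hm Huv'.
have Hmn' : lek m (meetx n (pdeg x)).
  apply/lekP => i; move: (lek_i i Hmn); move/lekxP: Hm => /(_ i); nksimp.
  case: (pdeg x i) => //=; mlia.
have Hr : s v = r (pmap x m (meetx n (pdeg x))) by rewrite Hv (P_r (GM_of Bx)) ?lekx_meet.
split.
- by rewrite !meetx0 C3 L3 D3 kcomp_assoc.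
- by rewrite !meetx0.
- rewrite kd_comp //; apply: nkP => i; move: (lek_i i Hmn); nksimp0; mlia.
Qed.

Lemma assoc_lrr (u : M) (x y : P) m n p q :
  OE (SB (inl u)) (RB (inr (x, m, n))) -> OE (SB (inr (x, m, n))) (RB (inr (y, p, q))) ->
  MV (inr (x, m, n)) -> MV (inr (y, p, q)) ->
  ME (CB (inl u) (CB (inr (x, m, n)) (inr (y, p, q))))
     (CB (CB (inl u) (inr (x, m, n))) (inr (y, p, q))).
Proof.
move=> /dec_lr [Hm Hu] /dec_rr [Hp [V1 V2]] [Bx Hmn Hn] [By Hpq Hq].
have G := GM_of Bx. have Gy := GM_of By.
have [R1 R2 R3 R4 [R5 R6 R7 R8]] := rr_spec Bx By Hmn Hpq Hn Hq (conj V1 V2).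
rewrite (meetx_id Hm) in R3 R4 R7.
have HmN : lek m (subk (addk n q) p).
  by apply/lekP => i; nksimp0; move: (lek_i i Hmn) (lek_i i Hpq); mlia.
have HmZ : lekx m (pdeg (prepend (pmap x 0 (meetx n (pdeg x))) (shift (meetx p (pdeg y)) y))).
  by rewrite R8.
have HuZ : s u = vert (prepend (pmap x 0 (meetx n (pdeg x))) (shift (meetx p (pdeg y)) y)) m.
  by rewrite R7.
have [_ _ C3 _ _] := lr_spec R1 HmN R2 HmZ HuZ.
have [L1 L2 L3 L5 [L6 L7]] := lr_spec Bx Hmn Hn Hm Hu.
have V' : Veq (prepend u (shift m x)) (subk (addk (d u) n) m) y p.
  by split; rewrite ?L6 ?L5.
have [_ _ S3 S4 _] := rr_spec L1 By (lek0 _) Hpq L2 Hq V'.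
rewrite !meetx0 in S4.
have Hmn' : lek m (meetx n (pdeg x)).
  apply/lekP => i; move: (lek_i i Hmn); move/lekxP: Hm => /(_ i); nksimp.
  case: (pdeg x i) => //=; mlia.
have Hs1 : s u = r (pmap x m (meetx n (pdeg x))) by rewrite Hu P_r // lekx_meet.
have Hs2 : s (pmap x m (meetx n (pdeg x))) = r (pmap y (meetx p (pdeg y)) (meetx q (pdeg y))).
  by rewrite P_s ?lekx_meet // V1 Pr_meet.
split.
- by rewrite !meetx0 C3 R4 S4 L3 kcomp_assoc.
- by rewrite !meetx0.
- apply: nkP => i; move: (lek_i i Hmn) (lek_i i Hpq); nksimp0; mlia.
Qed.

Lemma assoc_rrr (x y w : P) m n p q a b :
  OE (SB (inr (x, m, n))) (RB (inr (y, p, q))) -> OE (SB (inr (y, p, q))) (RB (inr (w, a, b))) ->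
  MV (inr (x, m, n)) -> MV (inr (y, p, q)) -> MV (inr (w, a, b)) ->
  ME (CB (inr (x, m, n)) (CB (inr (y, p, q)) (inr (w, a, b))))
     (CB (CB (inr (x, m, n)) (inr (y, p, q))) (inr (w, a, b))).
Proof.
move=> /dec_rr [Hp [V1 V2]] /dec_rr [Ha [W1 W2]] [Bx Hmn Hn] [By Hpq Hq] [Bw Hab Hb].
have [G1 G2 G3 G4 [G5 G6 G7 G8]] := rr_spec By Bw Hpq Hab Hq Hb (conj W1 W2).
have HpN : lek p (subk (addk q b) a).
  by apply/lekP => i; nksimp0; move: (lek_i i Hpq) (lek_i i Hab); mlia.
have VA : Veq x n (prepend (pmap y 0 (meetx q (pdeg y))) (shift (meetx a (pdeg w)) w)) p.
  by split; rewrite G3 ?G7.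
have [_ _ A3 A4 _] := rr_spec Bx G1 Hmn HpN Hn G2 VA.
have [F1 F2 F3 F4 [F5 F6 F7 F8]] := rr_spec Bx By Hmn Hpq Hn Hq (conj V1 V2).
have HmN : lek m (subk (addk n q) p).
  by apply/lekP => i; nksimp0; move: (lek_i i Hmn) (lek_i i Hpq); mlia.
have VB : Veq (prepend (pmap x 0 (meetx n (pdeg x))) (shift (meetx p (pdeg y)) y))
              (subk (addk n q) p) w a.
  by split; rewrite ?F6 ?F5.
have [_ _ B3 B4 _] := rr_spec F1 Bw HmN Hab F2 Hb VB.
rewrite F3 in B3 B4; rewrite F4 in B4.
have Hs1 : s (pmap x (meetx m (pdeg x)) (meetx n (pdeg x))) =
           r (pmap y (meetx p (pdeg y)) (meetx q (pdeg y))).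
  by rewrite (Ps_meet (GM_of Bx) Hmn) V1 (Pr_meet (GM_of By) Hpq).
have Hs2 : s (pmap y (meetx p (pdeg y)) (meetx q (pdeg y))) =
           r (pmap w (meetx a (pdeg w)) (meetx b (pdeg w))).
  by rewrite (Ps_meet (GM_of By) Hpq) W1 (Pr_meet (GM_of Bw) Hab).
split.
- by rewrite A3 B3 A4 B4 G3 G4 kcomp_assoc.
- by rewrite A3 B3.
- apply: nkP => i; move: (lek_i i Hmn) (lek_i i Hpq) (lek_i i Hab); nksimp0; mlia.
Qed.

Lemma comp_assoc' f g h : MV f -> MV g -> MV h ->
  OE (SB f) (RB g) -> OE (SB g) (RB h) -> ME (CB f (CB g h)) (CB (CB f g) h).
Proof.
move=> Vf Vg Vh Hfg Hgh.
destruct f as [u|[[x m] n]]; destruct g as [v|[[y p] q]]; destruct h as [w|[[z a] b]].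
- by move: Hfg Hgh => /= H1 H2; rewrite /= kcomp_assoc.
- exact: assoc_llr.
- by move: Hgh => /= [].
- exact: assoc_lrr.
- by move: Hfg => /= [].
- by move: Hfg => /= [].
- by move: Hgh => /= [].
- exact: assoc_rrr.
Qed.

End Assoc.

Theorem lemma3p21 (k : nat) (L : kgraph k) :
  setoid_category (@obar_valid k L) (@mbar_valid k L)
    (@obar_eq k L) (@mbar_eq k L)
    (@rbar k L) (@sbar k L) (@idbar k L) (@compbar k L).
Proof.
constructor.
- move=> a _; exact: oe_refl.
- move=> a b _ _; exact: oe_sym.
- move=> a b e _ _ _; exact: oe_trans.
- move=> f _; exact: me_refl.
- move=> f g _ _; exact: me_sym.
- move=> f g h _ _ _; exact: me_trans.
- case=> [u|[[x m] n]] //= [Bx Hmn Hn]; case: ifP => //= H; split => //; by rewrite H.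
- by case=> [u|[[x m] n]] //= [Bx Hmn Hn].
- case=> [v|[x m]] //= [Bx Hm]; split => //; exact: lekk.
- exact: c_valid'.
- exact: r_resp'.
- exact: s_resp'.
- exact: i_resp'.
- exact: c_resp'.
- exact: r_comp'.
- exact: s_comp'.
- case=> [v|[x m]] /=; first by rewrite kr_id.
  move=> [Bx Hm]; rewrite (negbTE Hm) /=; exact: oe_refl (inr (x, m)).
- case=> [v|[x m]] /=; first by rewrite ks_id.
  move=> _; exact: oe_refl (inr (x, m)).
- exact: comp_il'.
- exact: comp_ir'.
- exact: comp_assoc'.
Qed.
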